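(* Let $q,q',n$ be integers with $q'\ge 2q>3$ and $n>1$. Let $S$ be an $\mathcal{OS}_q(n)$ of period $m$ with ring sequence $[s_0,\ldots,s_{m-1}]$, and for $x\in\mathbb{Z}_q$ let $x'$ denote the class in $\mathbb{Z}_{q'}$ of the integer in $\{0,\ldots,q-1\}$ representing $x$. Define $t_i\in\mathbb{Z}_{q'}$ for $0\le i\le m-1$ by $t_i=(-1)^{i+m-1}s_i'$ if $s_i'\neq 0$ and $t_i=(-1)^{i+m-1}q$ if $s_i'=0$. Let $T'$ be the periodic sequence over $\mathbb{Z}_{q'}$ with ring sequence $[t_0,\ldots,t_{m-1},-t_0,\ldots,-t_{m-1}]$. Then $T'$ is an $\mathcal{SOS}_{q'}(n)$ and $w_{q'}(T')=0$.
   Context: For a periodic sequence $S=(s_i)$ over $\mathbb{Z}_q$ write $\mathbf{s}_n(i)=(s_i,\ldots,s_{i+n-1})$; $\mathbf{u}^R$ denotes the reverse of a tuple and $-\mathbf{u}$ its termwise negative. An $n$-window sequence of period $m$ satisfies $\mathbf{s}_n(i)=\mathbf{s}_n(j)\Rightarrow i\equiv j\pmod m$. An $\mathcal{OS}_q(n)$ is an $n$-window sequence with $\mathbf{s}_n(i)\neq\mathbf{s}_n(j)^R$ for all $i,j$; an $\mathcal{SOS}_q(n)$ is an $\mathcal{OS}_q(n)$ with also $\mathbf{s}_n(i)\neq-\mathbf{s}_n(j)^R$ for all $i,j$. The ring sequence of a sequence of period $m$ is one period. The weight $w(S)$ is the integer sum of one period with terms taken in $\{0,\ldots,q-1\}$;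 $w_q(S)=w(S)\bmod q$. *)

(* Defs.v *)
From HB Require Import structures.
From mathcomp Require Import all_boot all_order all_algebra.
Set Implicit Arguments. Unset Strict Implicit. Unset Printing Implicit Defensive.
Import GRing.Theory.
Local Open Scope ring_scope.

(* A periodic sequence is represented by its ring sequence r (one period,
   of length m = size r); its i-th term is r_(i mod m). *)
Section Windows.
Variable V : zmodType.

Definition ring_elt (r : seq V) (i : nat) : V := nth 0 r (i %% size r).

Definition window (r : seq V) (n i : nat) : seq V :=
  mkseq (fun k => ring_elt r (i + k)) n.

Definition is_nwindow (n : nat) (r : seq V) : Prop :=
  (0 < size r)%N /\
  forall i j, window r n i = window r n j -> i = j %[mod size r].

Definition is_OS (n : nat) (r : seq V) : Prop :=
  is_nwindow n r /\ forall i j, window r n i <> rev (window r n j).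

Definition is_SOS (n : nat) (r : seq V) : Prop :=
  is_OS n r /\ forall i j, window r n i <> map -%R (rev (window r n j)).
End Windows.

Definition weight (q : nat) (r : seq 'Z_q) : nat := (\sum_(x <- r) (x : nat))%N.

Definition zlift (q q' : nat) (x : 'Z_q) : 'Z_q' := (x : nat)%:R.

Definition tseq (q q' : nat) (s : seq 'Z_q) : seq 'Z_q' :=
  mkseq (fun i => let x := zlift q' (nth 0 s i) in
                  (-1) ^+ (i + size s - 1) * (if x != 0 then x else q%:R))
        (size s).

Definition Tprime (q q' : nat) (s : seq 'Z_q) : seq 'Z_q' :=
  tseq q' s ++ map -%R (tseq q' s).

(* Main.v *)
Require Import Defs.
From mathcomp Require Import all_boot all_order all_algebra.
From mathcomp Require Import zify.
Set Implicit Arguments. Unset Strict Implicit.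
Import GRing.Theory.
Local Open Scope ring_scope.

Lemma valN p (hp : (1 < p)%N) (x : 'Z_p) : nat_of_ord (- x) = ((p - x) %% p)%N.
Proof. case: p hp x => [|[|p]] // _ x. Qed.

Lemma valx p (hp : (1 < p)%N) (x : 'Z_p) : (nat_of_ord x < p)%N.
Proof. case: p hp x => [|[|p]] // _ x. Qed.

Definition phi (q q' : nat) (v : 'Z_q') : 'Z_q := (minn (v : nat) (q' - v))%:R.

Lemma phiN q q' (hq' : (1 < q')%N) (v : 'Z_q') : phi q (- v) = phi q v.
Proof.
rewrite /phi valN //; have := valx hq' v.
case: (posnP (v : nat)) => [->|vp] vl.
  rewrite subn0 modnn; congr (_%:R); lia.
rewrite modn_small; last lia.
congr (_%:R); lia.
Qed.

Lemma phiC q q' (hq : (1 < q)%N) (hqq : (2 * q <= q')%N) u : (u <= q)%N ->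
  phi q (u%:R : 'Z_q') = u%:R.
Proof.
move=> uq; rewrite /phi val_Zp_nat; last lia.
rewrite modn_small; last lia.
congr (_%:R); lia.
Qed.

Lemma two_u q q' (hq : (1 < q)%N) (hqq : (2 * q <= q')%N) u : (u <= q)%N ->
  (u%:R : 'Z_q') = - u%:R -> (u%:R : 'Z_q) = 0.
Proof.
move=> uq /eqP; rewrite -subr_eq0 opprK -natrD => /eqP H.
have : nat_of_ord ((u + u)%:R : 'Z_q') = 0%N by rewrite H.
rewrite val_Zp_nat; last lia.
move=> /eqP; rewrite -/(dvdn _ _) => /dvdnP [c hc].
have [c0|c1] : c = 0%N \/ (c = 1)%N by nia.
  have -> : u = 0%N by lia. by [].
have -> : u = q by nia.
by rewrite pchar_Zp.
Qed.

Lemma signE (R : pzRingType) k (y : R) : (-1) ^+ k * y = y \/ (-1) ^+ k * y = - y.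
Proof. rewrite -signr_odd; case: (odd k); [right|left]; by rewrite ?expr1 ?expr0 ?mulN1r ?mul1r. Qed.

Lemma yE q q' (hq : (1 < q)%N) (hqq : (2 * q <= q')%N) (x : 'Z_q) :
  exists U, [/\ (U <= q)%N,
    (if zlift q' x != 0 then zlift q' x else q%:R) = (U%:R : 'Z_q') &
    (U%:R : 'Z_q) = x].
Proof.
rewrite /zlift /=; have xl := valx hq x.
case: ifP => [_|/negbFE/eqP H].
  exists (x : nat); split => //; [lia | exact: natr_Zp].
exists q; split => //; rewrite pchar_Zp //.
have : nat_of_ord ((x : nat)%:R : 'Z_q') = 0%N by rewrite H.
rewrite val_Zp_nat; last lia.
rewrite modn_small; last lia.
by move=> x0; apply/val_inj.
Qed.

Lemma size_tseq q q' (s : seq 'Z_q) : size (tseq q' s) = size s.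
Proof. by rewrite size_mkseq. Qed.

Lemma nth_tseq q q' (s : seq 'Z_q) i : (i < size s)%N ->
  nth 0 (tseq q' s) i = (-1) ^+ (i + size s - 1) *
     (if zlift q' (nth 0 s i) != 0 then zlift q' (nth 0 s i) else q%:R).
Proof. by move=> hi; rewrite nth_mkseq. Qed.

Lemma ringT q q' (s : seq 'Z_q) X : (0 < size s)%N ->
  ring_elt (Tprime q' s) X =
  (-1) ^+ (size s <= X %% (size s + size s))%N * nth 0 (tseq q' s) (X %% size s).
Proof.
move=> m0; set m := size s.
rewrite /ring_elt /Tprime size_cat !size_map ?size_iota -/m.
have hr : (X %% (m + m) < m + m)%N by rewrite ltn_pmod // addn_gt0 m0.
have hmod : ((X %% (m + m)) %% m = X %% m)%N.
  by apply: modn_dvdm; rewrite dvdn_addr.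
rewrite nth_cat size_tseq -/m.
case: ltnP => h.
  by rewrite expr0 mul1r -hmod (modn_small h).
rewrite (nth_map 0); last by rewrite size_mkseq -/m; lia.
rewrite expr1 mulN1r; congr (- nth _ _ _).
rewrite -hmod; move: h hr; set r := (X %% (m + m))%N => h hr.
by rewrite -{2}(subnK h) modnDr modn_small //; lia.
Qed.

Lemma signE2 (R : pzRingType) k (y : R) : (-1) ^+ k * y = - ((-1) ^+ k * y) -> y = - y.
Proof. case: (signE k y) => ->; first by []. by move/oppr_inj. Qed.

Lemma phi_sign q q' (hq' : (1 < q')%N) k (y : 'Z_q') : phi q ((-1) ^+ k * y) = phi q y.
Proof. by case: (signE k y) => ->; rewrite ?phiN. Qed.

Lemma LphiT q q' (s : seq 'Z_q) (hq : (1 < q)%N) (hqq : (2 * q <= q')%N) X :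
  (0 < size s)%N -> phi q (ring_elt (Tprime q' s) X) = ring_elt s X.
Proof.
move=> m0; have hq' : (1 < q')%N by lia.
rewrite ringT // nth_tseq; last by rewrite ltn_mod.
rewrite /ring_elt.
have [U [Uq -> <-]] := yE hq hqq (nth 0 s (X %% size s)).
by rewrite !phi_sign // phiC.
Qed.

Lemma LneqT q q' (s : seq 'Z_q) (hq : (1 < q)%N) (hqq : (2 * q <= q')%N) X :
  (0 < size s)%N -> ring_elt (Tprime q' s) X = - ring_elt (Tprime q' s) X ->
  ring_elt s X = 0.
Proof.
move=> m0; rewrite ringT // nth_tseq; last by rewrite ltn_mod.
rewrite /ring_elt.
have [U [Uq -> <-]] := yE hq hqq (nth 0 s (X %% size s)).
by move/signE2/signE2; apply: two_u.
Qed.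

Lemma LshiftT q q' (s : seq 'Z_q) X : (0 < size s)%N ->
  ring_elt (Tprime q' s) (X + size s) = - ring_elt (Tprime q' s) X.
Proof.
move=> m0; rewrite !ringT // modnDr; set m := size s.
have hr : (X %% (m + m) < m + m)%N by rewrite ltn_pmod // addn_gt0 m0.
rewrite -modnDml.
move: hr; set r := (X %% (m + m))%N => hr.
have [h|h] := ltnP r m.
  rewrite modn_small; last lia.
  by rewrite leq_addl expr1 expr0 mulN1r mul1r.
rewrite -{1}(subnK h) -addnA modnDr modn_small; last lia.
have -> : (m <= r - m)%N = false by apply/negbTE; rewrite -ltnNge; lia.
by rewrite expr1 expr0 mulN1r mul1r opprK.
Qed.

Lemma window_mod (V : zmodType) (r : seq V) n i : window r n i = window r n (i %% size r).
Proof. rewrite /window; apply: eq_mkseq => k; by rewrite /ring_elt modnDml. Qed.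

Lemma wphi q q' (s : seq 'Z_q) (hq : (1 < q)%N) (hqq : (2 * q <= q')%N) n i :
  (0 < size s)%N -> map (@phi q q') (window (Tprime q' s) n i) = window s n i.
Proof. move=> m0; rewrite /window /mkseq -map_comp; apply: eq_map => k /=; exact: LphiT. Qed.

Lemma wsum q' (hq' : (1 < q')%N) (t : seq 'Z_q') :
  (q' %| \sum_(x <- t ++ map -%R t) (x : nat))%N.
Proof.
have -> : (\sum_(x <- t ++ map -%R t) (x : nat) =
   \sum_(x <- t) ((x : nat) + nat_of_ord (- x)))%N.
  by rewrite big_split /= big_cat /= big_map.
apply: dvdn_sum => x _; rewrite valN //.
have := valx hq' x; case: (posnP (x : nat)) => [->|xp] xl.
  by rewrite subn0 modnn.
rewrite modn_small; last lia.
by rewrite subnKC ?dvdnn //; lia.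
Qed.

Theorem theorem3p15 (q q' n : nat) (s : seq 'Z_q) :
  (3 < 2 * q)%N -> (2 * q <= q')%N -> (1 < n)%N ->
  is_OS n s ->
  is_SOS n (Tprime q' s) /\ (weight (Tprime q' s) %% q' = 0)%N.
Proof.
move=> h3 hqq hn [[m0 nw] os].
have hq : (1 < q)%N by lia.
have hq' : (1 < q')%N by lia.
have sizeT : size (Tprime q' s) = (size s + size s)%N.
  by rewrite size_cat !size_map ?size_iota.
have wT i j : window (Tprime q' s) n i = window (Tprime q' s) n j ->
    window s n i = window s n j.
  by move=> H; rewrite -(@wphi q q' s hq hqq n i m0) H wphi.
split; last first.
  by apply/eqP; apply: wsum.
have key a b : (a < b)%N -> (b < size s + size s)%N ->
    (a %% size s = b %% size s)%N ->
    window (Tprime q' s) n a = window (Tprime q' s) n b -> False.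
  move=> ab bl abm H.
  have bam : b = (a + size s)%N.
    have : (size s %| b - a)%N by rewrite -eqn_mod_dvd ?(ltnW ab) // abm.
    case/dvdnP => c hc.
    have c1 : c = 1%N by nia.
    lia.
  have z k : (k < n)%N -> ring_elt s (a + k) = 0.
    move=> kn; apply: (@LneqT q q' s hq hqq _ m0).
    have := congr1 (fun w => nth 0 w k) H; rewrite /window !nth_mkseq //.
    by rewrite bam addnAC LshiftT.
  apply: (os a a).
  have -> : window s n a = nseq n 0.
    apply: (@eq_from_nth _ 0); first by rewrite size_mkseq size_nseq.
    move=> k; rewrite size_mkseq => kn; rewrite nth_mkseq // nth_nseq kn; exact: z.
  by rewrite rev_nseq.
split; [split; [split|] |].
- by rewrite sizeT addn_gt0 m0.
- move=> i j H.
  have hm := nw i j (wT i j H).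
  rewrite (window_mod _ _ i) (window_mod _ _ j) sizeT in H.
  rewrite sizeT.
  have ha : ((i %% (size s + size s)) %% size s = i %% size s)%N.
    by apply: modn_dvdm; rewrite dvdn_addr.
  have hb : ((j %% (size s + size s)) %% size s = j %% size s)%N.
    by apply: modn_dvdm; rewrite dvdn_addr.
  have li : (i %% (size s + size s) < size s + size s)%N by rewrite ltn_pmod // addn_gt0 m0.
  have lj : (j %% (size s + size s) < size s + size s)%N by rewrite ltn_pmod // addn_gt0 m0.
  case: (ltngtP (i %% (size s + size s)) (j %% (size s + size s))) => [lt|gt|//].
    by exfalso; apply: (key _ _ lt lj _ H); rewrite ha hb.
  by exfalso; apply: (key _ _ gt li _ (esym H)); rewrite ha hb.
- move=> i j H; apply: (os i j).
  by rewrite -(@wphi q q' s hq hqq n i m0) H map_rev wphi.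
- move=> i j H; apply: (os i j).
  have E (w : seq 'Z_q') : map (@phi q q') (map -%R w) = map (@phi q q') w.
    by rewrite -map_comp; apply: eq_map => x /=; exact: phiN.
  by rewrite -(@wphi q q' s hq hqq n i m0) H E map_rev wphi.
Qed.
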